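(* Let $\ell\ge2$ be an integer and $A,B\in\mathbb C$. Define $\tilde e_0,\dots,\tilde e_{\ell-1}$ by $\ell\tilde e_0=A$, $(\ell-1)\tilde e_1=-(A^2/\ell^2-B)$, and $$(\ell-(k+1))\tilde e_{k+1}=-\sum_{t=0}^k\tilde e_t\tilde e_{k-t},\qquad 1\le k\le\ell-2 .$$ Then $$q_\ell:=-\sum_{t=0}^{\ell-1}\tilde e_t\tilde e_{\ell-1-t}=\frac{(-1)^\ell}{(\ell!)^2}\prod_{j=0}^{\ell}\bigl(A-(\ell-2j)B^{1/2}\bigr),$$ where the right-hand side is independent of the choice of square root $B^{1/2}$ (it is a polynomial in $A,B$). *)

(* Defs.v *)
From HB Require Import structures.
From mathcomp Require Import all_boot all_order all_algebra.
From mathcomp Require Import complex.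
From mathcomp Require Import Rstruct.
Set Implicit Arguments. Unset Strict Implicit. Unset Printing Implicit Defensive.
Import Order.TTheory GRing.Theory Num.Theory.

Definition CC : numClosedFieldType := (Rdefinitions.R)[i].

(* Main.v *)
Require Import Defs.
From HB Require Import structures.
From mathcomp Require Import all_boot all_order all_algebra.
From mathcomp Require Import complex Rstruct.
From mathcomp Require Import ring zify.
Import Order.TTheory GRing.Theory Num.Theory.
Local Open Scope ring_scope.

Lemma lowM (p q : {poly CC}) n :
  (forall j, (j < n)%N -> q`_j = 0) -> forall j, (j < n)%N -> (p * q)`_j = 0.
Proof.
move=> H j Hj; rewrite coefM; apply: big1 => i _.
by rewrite H ?mulr0 //; apply: leq_ltn_trans (leq_subr i j) Hj.
Qed.

Lemma coefXD (p : {poly CC}) n : ('X * p^`())`_n = p`_n *+ n.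
Proof. by rewrite coefXM; case: n => [|n] //=; rewrite coef_deriv. Qed.

Lemma prod_fact n : \prod_(j < n) (j.+1)%:R = n`!%:R :> CC.
Proof.
elim: n => [|n IH]; first by rewrite big_ord0.
by rewrite big_ord_recr /= IH factS natrM mulrC.
Qed.

Lemma natr_neq (a b : nat) : a <> b -> (a%:R - b%:R : CC) != 0.
Proof. by move=> H; rewrite subr_eq0 eqr_nat; apply/eqP. Qed.

Lemma lhs_coef (l : nat) (p G : {poly CC}) n :
  (forall j, (j < n)%N -> G`_j = 0) ->
  ('X * G^`() - l%:R * G + 'X * (p * G))`_n = (n%:R - l%:R) * G`_n.
Proof.
move=> H; rewrite coefD coefB coefXD mulr_natl coefMn coefXM.
case: n H => [|m] H /=; first by rewrite mulr0n addr0 !sub0r mulNr mulr_natl.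
rewrite (lowM p G _ H m (ltnSn m)) addr0 mulrBl !mulr_natl.
by [].
Qed.

Theorem lemma3p3 (l : nat) (hl : (2 <= l)%N) (A B : CC) (e : nat -> CC)
  (he0 : l%:R * e 0%N = A)
  (he1 : (l - 1)%:R * e 1%N = - (A ^+ 2 / (l%:R) ^+ 2 - B))
  (herec : forall k : nat, (1 <= k)%N -> (k <= l - 2)%N ->
     (l - k.+1)%:R * e k.+1 = - \sum_(t < k.+1) e t * e (k - t)%N) :
  forall s : CC, s ^+ 2 = B ->
  - \sum_(t < l) e t * e (l - 1 - t)%N =
    (-1) ^+ l / (l`!%:R) ^+ 2 * \prod_(j < l.+1) (A - (l%:R - (2 * j)%:R) * s).
Proof.
move=> s hs.
set q := - \sum_(t < l) e t * e (l - 1 - t)%N.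
pose lam := - s.
have hlam : lam ^+ 2 = B by rewrite sqrrN.
pose Ep := \poly_(i < l) e i.
pose F := Ep + lam%:P.
pose P n := \prod_(j < n) (A + (l%:R - (2 * j)%:R) * lam).
pose Q n := \prod_(j < n) ((j.+1)%:R * (j%:R - l%:R)) : CC.
pose d n := P n / Q n.
pose V := \poly_(i < l.+1) d i.
pose O := 'X * V^`()^`() + (2%:R * lam)%:P * ('X * V^`()) - l%:R * V^`()
          - (l%:R * lam + A)%:P * V.
pose R := 'X * Ep^`() - l%:R * Ep - 'X * (Ep * Ep) + B%:P * 'X + A%:P.
pose G := V^`() + V * F.
have key : 'X * G^`() - l%:R * G + 'X * (((2%:R * lam)%:P - F) * G) = O + V * R.
  rewrite /G /F /O /R derivD derivM derivD derivC addr0 -hlam.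
  rewrite !(polyCD, polyCM, polyC_natr, rmorphXn).
  ring.
have l0 : (l%:R : CC) != 0 by rewrite pnatr_eq0 -lt0n (leq_trans _ hl).
have EE : forall m, (m < l)%N -> (Ep * Ep)`_m = \sum_(t < m.+1) e t * e (m - t)%N.
  move=> m hm; rewrite coefM; apply: eq_bigr => [[j hj]] _ /=.
  have h1 : (j < l)%N by apply: leq_trans hj hm.
  have h2 : (m - j < l)%N by apply: leq_ltn_trans (leq_subr _ _) hm.
  by rewrite !coef_poly h1 h2.
have Rc : forall n, R`_n = Ep`_n *+ n - Ep`_n *+ l
    - (if n == 0%N then 0 else (Ep * Ep)`_n.-1) + B * (n == 1)%:R
    + (if n == 0%N then A else 0).
  by move=> n; rewrite /R !(coefB, coefD) coefXD mulr_natl coefMn coefXM coefCM coefX coefC.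
have Rlow : forall n, (n < l)%N -> R`_n = 0.
  move=> [|[|m]] hn; rewrite Rc /=.
  - by rewrite coef_poly (leq_trans _ hl) // -he0; ring.
  - have e00 : A ^+ 2 / l%:R ^+ 2 = e 0%N * e 0%N by rewrite -he0; field.
    rewrite EE; last by lia.
    rewrite big_ord1 coef_poly hn.
    have h := he1; rewrite e00 natrB in h; last by lia.
    transitivity (-( (l%:R - 1) * e 1%N - - (e 0%N * e 0%N - B))); first by ring.
    by rewrite h subrr oppr0.
  - have hm : (m.+1 <= l - 2)%N by lia.
    have h := herec m.+1 (ltn0Sn _) hm.
    rewrite natrB in h; last by lia.
    rewrite coef_poly hn EE; last by lia.
    transitivity (-( (l%:R - m.+2%:R) * e m.+2 - - \sum_(t < m.+2) e t * e (m.+1 - t)%N)); first by ring.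
    by rewrite h subrr oppr0.
have Rl : R`_l = q.
  have hl0 : (l == 0%N) = false by apply: gtn_eqF; apply: leq_trans hl.
  have hl1 : (l == 1%N) = false by apply: gtn_eqF.
  rewrite Rc coef_poly ltnn /= mul0rn subrr sub0r hl0 hl1 mulr0 !addr0 EE; last by lia.
  rewrite /q prednK ?subn1 //; lia.
have Qnz : forall n, (n <= l)%N -> Q n != 0.
  elim=> [_|n IH hn]; first by rewrite /Q big_ord0 oner_neq0.
  rewrite /Q big_ord_recr /= mulf_neq0 //; first exact: IH (ltnW hn).
  rewrite mulf_neq0 ?pnatr_eq0 //.
  by apply: natr_neq => h; rewrite h ltnn in hn.
have drec : forall n, (n < l)%N -> (n.+1%:R * (n%:R - l%:R)) * d n.+1
    = (A + (l%:R - (2 * n)%:R) * lam) * d n.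
  move=> n hn; have h1 := Qnz n (ltnW hn); move: h1; rewrite /d /P /Q => h1.
  rewrite !big_ord_recr /=.
  have h2 : n.+1%:R != 0 :> CC by rewrite pnatr_eq0.
  have h3 : n%:R - l%:R != 0 :> CC by apply: natr_neq => h; rewrite h ltnn in hn.
  field; rewrite h1 h3 /= addrC natr1; exact: h2.
have Olow : forall n, (n < l)%N -> O`_n = 0.
  move=> n hn; rewrite /O -polyC_natr !(coefB, coefD, coefXD, coefCM, coef_deriv).
  have hv1 : (n < l.+1)%N by lia.
  have hv2 : (n.+1 < l.+1)%N by lia.
  rewrite !coef_poly hv1 hv2.
  transitivity ((n.+1%:R * (n%:R - l%:R)) * d n.+1
    - (A + (l%:R - (2 * n)%:R) * lam) * d n); first by ring.
  by rewrite drec // subrr.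
have Ol : O`_l = - (A - l%:R * lam) * d l.
  rewrite /O -polyC_natr !(coefB, coefD, coefXD, coefCM, coef_deriv).
  rewrite !coef_poly ltnn ltnSn /=; ring.
have Glow : forall n, (n <= l)%N -> forall j, (j < n)%N -> G`_j = 0.
  elim=> [//|n IH hn j hj].
  rewrite ltnS leq_eqVlt in hj; case/orP: hj => [/eqP -> | hj]; last exact: IH (ltnW hn) j hj.
  have := congr1 (fun p : {poly CC} => p`_n) key; rewrite /= lhs_coef; last exact: IH (ltnW hn).
  have e1 : (O + V * R)`_n = 0 by rewrite coefD (Olow n hn) (lowM V R l Rlow n hn) addr0.
  move=> kn; have kn' : (n%:R - l%:R) * G`_n = 0 :> CC := etrans kn e1.
  move: kn' => /eqP; rewrite mulf_eq0.
  have hnl : n%:R - l%:R != 0 :> CC by apply: natr_neq => h; rewrite h ltnn in hn.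
  by rewrite (negbTE hnl) /= => /eqP.
have hq : q = (A - l%:R * lam) * d l.
  have := congr1 (fun p : {poly CC} => p`_l) key; rewrite /= lhs_coef; last exact: Glow l (leqnn l).
  have e1 : (O + V * R)`_l = - (A - l%:R * lam) * d l + q.
    rewrite coefD Ol coefM big_ord_recl /= subn0 Rl big1; last first.
      by move=> i _; rewrite Rlow ?mulr0 //; rewrite /bump /=; lia.
    by rewrite coef_poly /= /d /P /Q !big_ord0 divr1 mul1r addr0.
  move=> kn; have kn' : (l%:R - l%:R) * G`_l = - (A - l%:R * lam) * d l + q :> CC := etrans kn e1.
  move: kn'; rewrite subrr mul0r => /eqP.
  by rewrite eq_sym mulNr addrC subr_eq0 => /eqP.
have Ql : Q l = (-1) ^+ l * (l`!%:R) ^+ 2.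
  rewrite /Q big_split /= prod_fact (reindex_inj rev_ord_inj) /=.
  rewrite (eq_bigr (fun j : 'I_l => - (j.+1)%:R)); last first.
    by move=> j _; rewrite natrB ?ltn_ord //; ring.
  by rewrite prodrN card_ord prod_fact; ring.
rewrite hq /d Ql big_ord_recr /= /P /lam.
rewrite (eq_bigr (fun j : 'I_l => A - (l%:R - (2 * j)%:R) * s)); last first.
  by move=> j _; ring.
have hf : (l`!%:R : CC) != 0 by rewrite pnatr_eq0 -lt0n fact_gt0.
rewrite invfM -exprVn invr_sign natrM.
ring.
Qed.
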